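(* For every $\lambda>0$, \[ \lambda\,u(1_{S_{\mathrm u}},\lambda)\le\big(\mathfrak p_{i,j}(S_{\mathrm u})\big)_{(i,j)\in\mathcal{IJ}} \] (coordinatewise). Moreover, equality holds provided $\mathfrak p_{i,j}(S_{\mathrm u})=1$ for all $(i,j)\in\mathcal{IJ}$.
   Context: Let $S_1,\dots,S_N$ be disjoint compact metrizable separable spaces and $A_i$ generators of Feller semigroups (positive contraction semigroups, not necessarily conservative) on $C(S_i)$ with resolvents $R_{\lambda,i}=(\lambda-A_i)^{-1}$. Assume $A_1,\dots,A_M$ ($1\le M\le N$) are not conservative and the rest conservative. For $i\in\mathcal M=\{1,\dots,M\}$, assume the kernel of $A_i$ is trivial and there are continuous functions $\phi^{i,j}$, $j=1,\dots,\kappa(i)$, with $0\le\phi^{i,j}\le1_{S_i}$, $\lambda R_{\lambda,i}\phi^{i,j}\le\phi^{i,j}$ for all $\lambda>0$, $\lambda R_{\lambda,i}\phi^{i,j}\ne\phi^{i,j}$, and $\sum_{j=1}^{\kappa(i)}\phi^{i,j}=1_{S_i}$. Let $\ell^{i,j}_\lambda=\phi^{i,j}-\lambda R_{\lambda,i}\phi^{i,j}$, $\mathcal{IJ}=\{(i,j):i\in\mathcal M,1\le j\le\kappa(i)\}$, $\kappa=\sum_{i\in\mathcal M}\kappa(i)$. Let $S_{\mathrm u}$ be the disjoint union of the $S_i$ (functions on $S_i$ extended by zero; $f_i=f1_{S_i}$), $R^{\mathrm{du}}_\lambda f=\sum_{i=1}^NR_{\lambda,i}f_i$, and $\mathfrak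 p_{i,j}$, $(i,j)\in\mathcal{IJ}$, Borel sub-probability measures on $S_{\mathrm u}$. Let $N_\lambda:\mathbb R^\kappa\to\mathbb R^\kappa$, $(N_\lambda w)_{i,j}=\sum_{k\in\mathcal M}\sum_{l=1}^{\kappa(k)}w_{k,l}\int_{S_k}\ell^{k,l}_\lambda\,\mathrm d\mathfrak p_{i,j}$; $\|N_\lambda\|<1$ and $M_\lambda=I-N_\lambda$ is invertible. For $f\in C(S_{\mathrm u})$, $v(f,\lambda)=\big(\int_{S_{\mathrm u}}R^{\mathrm{du}}_\lambda f\,\mathrm d\mathfrak p_{i,j}\big)_{(i,j)\in\mathcal{IJ}}$ and $u(f,\lambda)=M_\lambda^{-1}v(f,\lambda)$, i.e. the unique solution of $u=v(f,\lambda)+N_\lambda u$. *)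

(* Defs.v *)
From mathcomp Require Import all_boot all_order all_algebra all_classical all_reals all_analysis.
Import numFieldNormedType.Exports.
Set Implicit Arguments.
Unset Strict Implicit.
Unset Printing Implicit Defensive.
Import Order.TTheory GRing.Theory Num.Theory.
Local Open Scope classical_set_scope.
Local Open Scope ring_scope.

Section Defs.
Context {R : realType} {T : pseudoPMetricType R}.

Definition Borel := g_sigma_algebraType (@open T).

(** C(D), for a clopen piece D of T, realised as the continuous functions on
    T vanishing outside D ("functions on S_i extended by zero"). *)
Definition Cext (D : set T) : set (T -> R) :=
  [set f | continuous f /\ forall x, ~ D x -> f x = 0].

Definition feller_semigroup (D : set T) (P : R -> (T -> R) -> (T -> R)) : Prop :=
  (forall t f, 0 <= t -> Cext D f -> Cext D (P t f)) /\
  (forall t (a : R) f g, 0 <= t -> Cext D f -> Cext D g ->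
     P t (fun x => a * f x + g x) = (fun x => a * P t f x + P t g x)) /\
  (forall t f, 0 <= t -> Cext D f -> (forall x, 0 <= f x) ->
     forall x, 0 <= P t f x) /\
  (forall t f (c : R), 0 <= t -> Cext D f -> (forall x, `|f x| <= c) ->
     forall x, `|P t f x| <= c) /\
  (forall f, Cext D f -> P 0 f = f) /\
  (forall s t f, 0 <= s -> 0 <= t -> Cext D f -> P (s + t) f = P s (P t f)) /\
  (forall f, Cext D f -> forall e : R, 0 < e ->
     \forall t \near 0^'+, forall x, `|P t f x - f x| <= e).

Definition udiff_quot (P : R -> (T -> R) -> (T -> R)) (f g : T -> R) : Prop :=
  forall e : R, 0 < e ->
    \forall t \near 0^'+, forall x, `|(P t f x - f x) / t - g x| <= e.

Definition is_generator (D : set T) (P : R -> (T -> R) -> (T -> R))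
    (domA : set (T -> R)) (A : (T -> R) -> (T -> R)) : Prop :=
  (forall f, domA f <-> (Cext D f /\ exists g, Cext D g /\ udiff_quot P f g)) /\
  (forall f, domA f -> Cext D (A f) /\ udiff_quot P f (A f)).

Definition feller_generator (D : set T) (domA : set (T -> R))
    (A : (T -> R) -> (T -> R)) : Prop :=
  exists P, feller_semigroup D P /\ is_generator D P domA A.

Definition conservative (D : set T) (domA : set (T -> R))
    (A : (T -> R) -> (T -> R)) : Prop :=
  domA (\1_D) /\ A (\1_D) = (fun=> 0).

Definition trivial_kernel (domA : set (T -> R)) (A : (T -> R) -> (T -> R)) : Prop :=
  forall f, domA f -> A f = (fun=> 0) -> f = (fun=> 0).

Definition is_resolvent (D : set T) (domA : set (T -> R))
    (A : (T -> R) -> (T -> R)) (lam : R) (Rl : (T -> R) -> (T -> R)) : Prop :=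
  (forall f, Cext D f -> domA (Rl f) /\ (fun x => lam * Rl f x - A (Rl f) x) = f) /\
  (forall g, domA g -> Rl (fun x => lam * g x - A g x) = g).

Definition Rdu (n : nat) (S : 'I_n -> set T)
    (Rs : 'I_n -> R -> (T -> R) -> (T -> R)) (lam : R) (f : T -> R) : T -> R :=
  fun x => \sum_(i < n) Rs i lam (fun y => f y * \1_(S i) y) x.

Section Indexed.
Variables (M K : nat) (kappa : 'I_M -> nat).
Variables (S : 'I_(M + K) -> set T) (Rs : 'I_(M + K) -> R -> (T -> R) -> (T -> R)).
Variables (phi : forall i : 'I_M, 'I_(kappa i) -> T -> R).
Variables (p : {i : 'I_M & 'I_(kappa i)} -> {measure set Borel -> \bar R}).

Definition ell (lam : R) (k : 'I_M) (l : 'I_(kappa k)) : T -> R :=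
  fun x => phi l x - lam * Rs (lshift K k) lam (phi l) x.

Definition Nmat (lam : R) (a b : {i : 'I_M & 'I_(kappa i)}) : R :=
  Rintegral (p a) (S (lshift K (tag b))) (ell lam (tagged b)).

(** Operator norm of N_lam on (R^kappa, sup norm): max row sum. *)
Definition Nnorm (lam : R) : R :=
  \big[Num.max/0]_(a : {i : 'I_M & 'I_(kappa i)})
     \sum_(b : {i : 'I_M & 'I_(kappa i)}) `|Nmat lam a b|.

Definition vvec (f : T -> R) (lam : R) : {i : 'I_M & 'I_(kappa i)} -> R :=
  fun a => Rintegral (p a) setT (Rdu S Rs lam f).

Definition uvec (f : T -> R) (lam : R) : {i : 'I_M & 'I_(kappa i)} -> R :=
  xget (fun=> 0) [set w : {i : 'I_M & 'I_(kappa i)} -> R |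
    forall a, w a = vvec f lam a + \sum_b Nmat lam a b * w b].

End Indexed.
End Defs.

(* Main.v *)
Require Import Defs.
From mathcomp Require Import all_boot all_order all_algebra all_classical all_reals all_analysis.
From mathcomp Require Import ring lra measurable_realfun.
Import numFieldNormedType.Exports.
Import Order.TTheory GRing.Theory Num.Theory.
Local Open Scope classical_set_scope.
Local Open Scope ring_scope.

Section PartA.
Context {R : realType} {I : finType} (N : I -> I -> R).
Let nn := \big[Num.max/0]_(a : I) \sum_(b : I) `|N a b|.

Lemma nn_ge0 : 0 <= nn.
Proof. exact: bigmax_ge_id. Qed.

Lemma row_le_nn a : \sum_b `|N a b| <= nn.
Proof. exact: (le_bigmax 0 (fun a => \sum_b `|N a b|) a). Qed.

Lemma kernel0 (d : I -> R) : nn < 1 ->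
  (forall a, d a = \sum_b N a b * d b) -> forall a, d a = 0.
Proof.
move=> hn hd.
set m := \big[Num.max/0]_(a : I) `|d a|.
have dm : forall a, `|d a| <= m by move=> a; exact: (le_bigmax 0 (fun a => `|d a|) a).
have m0 : 0 <= m by exact: bigmax_ge_id.
have h1 : forall a, `|d a| <= nn * m.
  move=> a; rewrite hd; apply: (le_trans (ler_norm_sum _ _ _)).
  apply: (@le_trans _ _ (\sum_b `|N a b| * m)).
    apply: ler_sum => b _; rewrite normrM; apply: ler_wpM2l => //.
  by rewrite -mulr_suml; apply: ler_wpM2r => //; exact: row_le_nn.
have : m <= nn * m.
  apply: bigmax_le; [exact: (mulr_ge0 nn_ge0 m0) | move=> a _; exact: h1].
move=> hm a; apply/eqP; rewrite -normr_eq0 eq_le normr_ge0 andbT.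
apply: (le_trans (dm a)).
have : (1 - nn) * m <= 0 by rewrite mulrBl mul1r subr_le0.
rewrite pmulr_rle0 // subr_gt0 //.
Qed.

Lemma nonpos (d : I -> R) : nn < 1 -> (forall a b, 0 <= N a b) ->
  (forall a, d a <= \sum_b N a b * d b) -> forall a, d a <= 0.
Proof.
move=> hn hN hd.
set m := \big[Num.max/0]_(a : I) d a.
have dm : forall a, d a <= m by move=> a; exact: (le_bigmax 0 d a).
have m0 : 0 <= m by exact: bigmax_ge_id.
have h1 : forall a, d a <= nn * m.
  move=> a; apply: (le_trans (hd a)).
  apply: (@le_trans _ _ (\sum_b `|N a b| * m)).
    apply: ler_sum => b _; rewrite ger0_norm //; apply: ler_wpM2l => //.
  by rewrite -mulr_suml; apply: ler_wpM2r => //; exact: row_le_nn.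
have : m <= nn * m.
  apply: bigmax_le; [exact: (mulr_ge0 nn_ge0 m0) | move=> a _; exact: h1].
move=> hm a; apply: (le_trans (dm a)).
have : (1 - nn) * m <= 0 by rewrite mulrBl mul1r subr_le0.
rewrite pmulr_rle0 // subr_gt0 //.
Qed.

Lemma existsol (v : I -> R) : nn < 1 ->
  exists w : I -> R, forall a, w a = v a + \sum_b N a b * w b.
Proof.
move=> hn.
pose n := #|I|.
pose Mx : 'M[R]_n := \matrix_(i, j) ((i == j)%:R - N (enum_val i) (enum_val j)).
have sumI : forall F : I -> R, \sum_(b : I) F b = \sum_(j < n) F (enum_val j).
  move=> F; rewrite (reindex (@enum_val I predT)) //.
  by exists (@enum_rank I) => x _; [exact: enum_valK | exact: enum_rankK].
have hu : Mx \in unitmx.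
  rewrite unitmxE unitfE -det_tr; apply/negP => /det0P [r r0 hr].
  pose d := fun b => r 0 (enum_rank b).
  have : forall a, d a = \sum_b N a b * d b.
    move=> a; move/matrixP: hr => /(_ 0 (enum_rank a)).
    rewrite !mxE => e; apply/eqP; rewrite -subr_eq0; apply/eqP; rewrite -[RHS]e.
    rewrite sumI /Mx.
    under [in RHS]eq_bigr do rewrite !mxE enum_rankK mulrBr.
    rewrite sumrB [in RHS](bigD1 (enum_rank a)) //= eqxx mulr1 [X in _ = _ + X - _]big1 ?addr0; last first.
      by move=> j hj; rewrite eq_sym (negbTE hj) mulr0.
    rewrite /d; congr (_ - _); apply: eq_bigr => j _; rewrite enum_valK mulrC //.
  move=> hd; have h0 := kernel0 d hn hd; move/negP: r0; apply; apply/eqP/matrixP => i j.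
  rewrite ord1 mxE; have := h0 (enum_val j); rewrite /d enum_valK //.
pose vc : 'cV[R]_n := \col_i v (enum_val i).
have [x hx] : exists x, Mx *m x = vc.
  by exists (invmx Mx *m vc); rewrite mulmxA mulmxV // mul1mx.
exists (fun b => x (enum_rank b) 0) => a.
move/matrixP: hx => /(_ (enum_rank a) 0); rewrite !mxE enum_rankK => <-.
rewrite sumI /Mx.
under eq_bigr do rewrite !mxE enum_rankK mulrBl.
rewrite sumrB (bigD1 (enum_rank a)) //= eqxx mul1r.
rewrite [X in _ = _ + X - _ + _]big1 ?addr0; last first.
  by move=> j hj; rewrite eq_sym (negbTE hj) mul0r.
under [X in _ = _ - _ + X]eq_bigr do rewrite enum_valK.
by rewrite subrK.
Qed.
End PartA.

Section PartB1.
Context {R : realType} {T : pseudoPMetricType R}.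
Implicit Types (D : set T) (f g : T -> R).

Lemma Cext_lin D (a : R) f g : Cext D f -> Cext D g ->
  Cext D (fun x => a * f x + g x).
Proof.
move=> [cf zf] [cg zg]; split.
  move=> x; apply: cvgD; [apply: cvgMl_tmp; exact: cf | exact: cg].
by move=> x hx; rewrite zf // zg // mulr0 addr0.
Qed.

Lemma Cext0 D : Cext D (fun=> 0).
Proof. by split => //; exact: cst_continuous. Qed.

Lemma udiff_uniq (P : R -> (T -> R) -> (T -> R)) f g1 g2 :
  udiff_quot P f g1 -> udiff_quot P f g2 -> g1 = g2.
Proof.
move=> h1 h2; apply: funext => x; apply/eqP; rewrite -subr_eq0 -normr_eq0.
rewrite eq_le normr_ge0 andbT; apply/unstable.ler_gtP => z z0.
have e0 : 0 < z / 2 by rewrite divr_gt0.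
have [t [ht1 ht2]] := @filter_ex _ _ (at_right_proper_filter (0:R)) _
  (filterI (h1 _ e0) (h2 _ e0)).
have := ht1 x; have := ht2 x.
set q := (P t f x - f x) / t => a1 a2.
have -> : g1 x - g2 x = (q - g2 x) - (q - g1 x) by lra.
apply: (le_trans (ler_normB _ _)).
by rewrite (splitr z) lerD.
Qed.

Lemma udiff_lin (P : R -> (T -> R) -> (T -> R)) (a : R) f g gf gg :
  (forall t, 0 < t -> P t (fun x => a * f x + g x) = (fun x => a * P t f x + P t g x)) ->
  udiff_quot P f gf -> udiff_quot P g gg ->
  udiff_quot P (fun x => a * f x + g x) (fun x => a * gf x + gg x).
Proof.
move=> hl hf hg e e0.
have e1 : 0 < e / 2 / (`|a| + 1) by rewrite !divr_gt0 // ltr_pwDr.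
have e2 : 0 < e / 2 by rewrite divr_gt0.
near=> t => x.
have t0 : 0 < t by near: t; exact: nbhs_right_gt.
have b1 : forall x, `|(P t f x - f x) / t - gf x| <= e / 2 / (`|a| + 1).
  by near: t; exact: hf.
have b2 : forall x, `|(P t g x - g x) / t - gg x| <= e / 2.
  by near: t; exact: hg.
rewrite hl //.
have -> : (a * P t f x + P t g x - (a * f x + g x)) / t - (a * gf x + gg x) =
  a * ((P t f x - f x) / t - gf x) + ((P t g x - g x) / t - gg x).
  by rewrite !mulrBl mulrDl !mulrBr -!mulrA; lra.
apply: (le_trans (ler_normD _ _)); rewrite (splitr e) lerD // normrM.
apply: (le_trans (ler_wpM2l (normr_ge0 a) (b1 x))).
have a1 : 0 < `|a| + 1 by rewrite ltr_pwDr.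
rewrite mulrA ler_pdivrMr // [X in X <= _]mulrC ler_pM2l // lerDl //.
Unshelve. all: end_near.
Qed.


Lemma gen_dom D domA A f : feller_generator D domA A -> domA f -> Cext D f.
Proof. by move=> [P [_ [hd _]]] /hd []. Qed.

Lemma gen_lin D domA A (a : R) f g : feller_generator D domA A ->
  domA f -> domA g ->
  domA (fun x => a * f x + g x) /\ A (fun x => a * f x + g x) = (fun x => a * A f x + A g x).
Proof.
move=> [P [[_ [hl _]] [hd hA]]] df dg.
have cf := proj1 ((hd f).1 df); have cg := proj1 ((hd g).1 dg).
have [cAf uf] := hA f df; have [cAg ug] := hA g dg.
have u : udiff_quot P (fun x => a * f x + g x) (fun x => a * A f x + A g x).
  apply: udiff_lin uf ug => t t0; apply: hl => //; exact: ltW.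
have dh : domA (fun x => a * f x + g x).
  apply/hd; split; first exact: Cext_lin.
  exists (fun x => a * A f x + A g x); split => //; exact: Cext_lin.
split => //; apply: udiff_uniq (proj2 (hA _ dh)) u.
Qed.

Lemma res_lin D domA A lam Rl (a : R) f g : feller_generator D domA A ->
  is_resolvent D domA A lam Rl -> Cext D f -> Cext D g ->
  Rl (fun x => a * f x + g x) = (fun x => a * Rl f x + Rl g x).
Proof.
move=> hg [r1 r2] cf cg.
have [df ef] := r1 f cf; have [dg eg] := r1 g cg.
have [dh eh] := @gen_lin _ _ _ a _ _ hg df dg.
rewrite -[RHS]r2 //; congr Rl; apply: funext => x; rewrite eh.
rewrite -[in LHS]ef -[in LHS]eg /=; lra.
Qed.

Lemma res0 D domA A lam Rl : feller_generator D domA A ->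
  is_resolvent D domA A lam Rl -> Rl (fun=> 0) = (fun=> 0).
Proof.
move=> hg hr; have := @res_lin _ _ _ _ _ 1 _ _ hg hr (Cext0 D) (Cext0 D).
have -> : (fun x : T => 1 * 0 + 0) = (fun=> 0 : R) by apply: funext => x; lra.
move=> e; apply: funext => x; have := congr1 (fun h => h x) e => /= e'; lra.
Qed.

Lemma Cext_sum D n (F : 'I_n -> T -> R) : (forall j, Cext D (F j)) ->
  Cext D (fun x => \sum_(j < n) F j x).
Proof.
elim: n F => [|n ih] F hF.
  under eq_fun do rewrite big_ord0; exact: Cext0.
have -> : (fun x => \sum_(j < n.+1) F j x) =
   (fun x => 1 * (\sum_(j < n) F (widen_ord (leqnSn n) j) x) + F ord_max x).
  by apply: funext => x; rewrite big_ord_recr mul1r.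
apply: Cext_lin => //; exact: ih.
Qed.

Lemma res_sum D domA A lam Rl n (F : 'I_n -> T -> R) : feller_generator D domA A ->
  is_resolvent D domA A lam Rl -> (forall j, Cext D (F j)) ->
  Rl (fun x => \sum_(j < n) F j x) = (fun x => \sum_(j < n) Rl (F j) x).
Proof.
move=> hg hr; elim: n F => [|n ih] F hF.
  under eq_fun do rewrite big_ord0; rewrite (@res0 _ _ _ _ _ hg hr).
  by apply: funext => x; rewrite big_ord0.
have -> : (fun x => \sum_(j < n.+1) F j x) =
   (fun x => 1 * (\sum_(j < n) F (widen_ord (leqnSn n) j) x) + F ord_max x).
  by apply: funext => x; rewrite big_ord_recr mul1r.
rewrite (@res_lin _ _ _ _ _ 1 _ _ hg hr) //; last exact: Cext_sum.
rewrite ih //; apply: funext => x; rewrite big_ord_recr mul1r //.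
Qed.

End PartB1.
Arguments gen_dom {R T D domA A f}.
Arguments gen_lin {R T D domA A} a {f g}.
Arguments res_lin {R T D domA A lam Rl} a {f g}.
Arguments res0 {R T D domA A lam Rl}.
Arguments res_sum {R T D domA A lam Rl n F}.
Arguments nonpos {R I N} d.
Arguments kernel0 {R I N} d.

Section PartB2.
Context {R : realType} {T : pseudoPMetricType R}.

Lemma open_meas (A : set T) : open A -> measurable (A : set (@Borel R T)).
Proof. by move=> oA; apply: sub_sigma_algebra. Qed.

Lemma cont_meas (f : T -> R) : continuous f ->
  measurable_fun (setT : set (@Borel R T)) f.
Proof.
move=> /continuousP cf; apply: (measurability _ (measurable_realfun.RGenOpens.measurableE R)).
move=> _ [_ [a [b ->]] <-]; rewrite setTI; apply: open_meas.
exact/cf/interval_open.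
Qed.

Lemma cext_bound (D : set T) f : compact D -> Cext D f ->
  exists c, 0 <= c /\ forall x, `|f x| <= c.
Proof.
move=> cD [cf zf].
have := compact_bounded (continuous_compact (continuous_subspaceT cf) cD).
case=> M [_ hM]; exists (`|M| + 1); split; first by rewrite addr_ge0.
move=> x; have [Dx|nDx] := pselect (D x).
  apply: hM; last by exists x.
  by apply: (le_lt_trans (ler_norm M)); rewrite ltrDl.
by rewrite zf // normr0 addr_ge0.
Qed.

Lemma bounded_int (mu : {measure set (@Borel R T) -> \bar R}) (f : T -> R) (c : R) :
  (mu setT <= 1)%E -> measurable_fun (setT : set (@Borel R T)) f -> 0 <= c -> (forall x, `|f x| <= c) ->
  mu.-integrable setT (EFin \o f).
Proof.
move=> hmu mf c0 hb; apply/integrableP; split; first exact/measurable_EFinP.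
apply: le_lt_trans.
  apply: (integral_le_bound c%:E) => //; first exact/measurable_EFinP.
  by apply: aeW => x _ /=; rewrite lee_fin.
rewrite lte_mul_pinfty // ?lee_fin //; exact: (le_lt_trans hmu (ltry 1)).
Qed.

Lemma Rint_sum (mu : {measure set (@Borel R T) -> \bar R}) (I : Type) (r : seq I)
  (F : I -> T -> R) : (forall b, mu.-integrable setT (EFin \o F b)) ->
  mu.-integrable setT (EFin \o (fun x => \sum_(b <- r) F b x)) /\
  Rintegral mu setT (fun x => \sum_(b <- r) F b x) = \sum_(b <- r) Rintegral mu setT (F b).
Proof.
move=> hF; elim: r => [|b r [ih1 ih2]].
  split.
    apply: eq_integrable (integrable0 mu setT) => //= x _; rewrite big_nil //.
  have -> : (fun x => \sum_(b <- [::]) F b x) = (fun=> 0) by apply: funext => x; rewrite big_nil.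
  by rewrite big_nil Rintegral_cst // mul0r.
split.
  have -> : EFin \o (fun x => \sum_(b0 <- b :: r) F b0 x) =
     (EFin \o F b) \+ (EFin \o (fun x => \sum_(b <- r) F b x)).
    by apply: funext => x /=; rewrite big_cons.
  exact: integrableD.
rewrite big_cons -ih2 -RintegralD //.
by apply: eq_Rintegral => x _; rewrite big_cons.
Qed.

End PartB2.

Arguments cext_bound {R T D f}.
Arguments bounded_int {R T mu f c}.
Arguments cont_meas {R T f}.
Arguments Rint_sum {R T mu I} r F.

Theorem lemma3 (R : realType) (T : pseudoPMetricType R)
  (M K : nat) (S : 'I_(M + K) -> set T)
  (domA : 'I_(M + K) -> set (T -> R)) (A : 'I_(M + K) -> (T -> R) -> (T -> R))
  (Rs : 'I_(M + K) -> R -> (T -> R) -> (T -> R))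
  (kappa : 'I_M -> nat) (phi : forall i : 'I_M, 'I_(kappa i) -> T -> R)
  (p : {i : 'I_M & 'I_(kappa i)} -> {measure set (@Borel R T) -> \bar R}) :
  (* T = S_u is a separable metric space *)
  hausdorff_space T ->
  (exists E : set T, countable E /\ closure E = setT) ->
  (* S_u is the disjoint union of the compact (clopen) pieces S_i *)
  (forall i j, i != j -> S i `&` S j = set0) ->
  (forall x, exists i, S i x) ->
  (forall i, open (S i) /\ compact (S i)) ->
  (0 < M)%N ->
  (* generators of Feller semigroups and their resolvents *)
  (forall i, feller_generator (S i) (domA i) (A i)) ->
  (forall i lam, 0 < lam -> is_resolvent (S i) (domA i) (A i) lam (Rs i lam)) ->
  (* A_1..A_M non-conservative, the others conservative *)
  (forall i : 'I_M, ~ conservative (S (lshift K i)) (domA (lshift K i)) (A (lshift K i))) ->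
  (forall i : 'I_K, conservative (S (rshift M i)) (domA (rshift M i)) (A (rshift M i))) ->
  (forall i : 'I_M, trivial_kernel (domA (lshift K i)) (A (lshift K i))) ->
  (* the functions phi^{i,j} *)
  (forall i j, Cext (S (lshift K i)) (phi i j)) ->
  (forall i j x, 0 <= phi i j x /\ phi i j x <= \1_(S (lshift K i)) x) ->
  (forall i j lam x, 0 < lam -> lam * Rs (lshift K i) lam (phi i j) x <= phi i j x) ->
  (forall i j lam, 0 < lam -> (fun x => lam * Rs (lshift K i) lam (phi i j) x) <> phi i j) ->
  (forall i x, \sum_(j < kappa i) phi i j x = \1_(S (lshift K i)) x) ->
  (* Borel sub-probability measures *)
  (forall a, (p a setT <= 1)%E) ->
  (* ||N_lam|| < 1 *)
  (forall lam, 0 < lam -> Nnorm S Rs phi p lam < 1) ->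
  (forall lam, 0 < lam -> forall a,
     lam * uvec S Rs phi p (fun=> 1) lam a <= fine (p a setT)) /\
  ((forall a, p a setT = 1%E) ->
   forall lam, 0 < lam -> forall a, lam * uvec S Rs phi p (fun=> 1) lam a = 1).

Proof.
move=> hT hsep hdisj hcov hoc hM0 hgen hres hncons hcons htriv hphiC hphi01 hphiR
  hphiNe hphisum hp1 hNn.
have key : forall lam, 0 < lam ->
  (forall a b, 0 <= Nmat S Rs phi p lam a b) /\
  (forall a, lam * vvec S Rs p (fun=> 1) lam a =
     fine (p a setT) - \sum_b Nmat S Rs phi p lam a b).
  move=> lam l0.
  have cR : forall i j, Cext (S (lshift K i)) (Rs (lshift K i) lam (phi i j)).
    move=> i j; apply: (gen_dom (hgen _)).
    exact: (proj1 ((hres _ _ l0).1 _ (hphiC i j))).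
  have cell : forall i (j : 'I_(kappa i)), Cext (S (lshift K i)) (ell Rs phi lam j).
    move=> i j.
    have -> : ell Rs phi lam j =
      (fun x => (- lam) * Rs (lshift K i) lam (phi i j) x + phi i j x).
      by apply: funext => x; rewrite /ell; lra.
    exact: Cext_lin.
  have iell : forall a (b : {i : 'I_M & 'I_(kappa i)}),
      (p a).-integrable setT (EFin \o ell Rs phi lam (tagged b)).
    move=> a [i j] /=.
    have [c [c0 hc]] := cext_bound (proj2 (hoc _)) (cell i j).
    exact: (bounded_int (hp1 a) (cont_meas (proj1 (cell i j))) c0 hc).
  have E5 : forall a (b : {i : 'I_M & 'I_(kappa i)}), Nmat S Rs phi p lam a b =
      Rintegral (p a) setT (ell Rs phi lam (tagged b)).
    move=> a [i j]; rewrite /Nmat /= Rintegral_mkcond; congr Rintegral.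
    apply: funext => x; rewrite /patch; case: ifPn => // /negP hx.
    by rewrite (proj2 (cell i j)) // => Sx; apply: hx; exact: mem_set.
  split.
    move=> a [i j]; apply: Rintegral_ge0 => x _.
    by rewrite /ell subr_ge0; apply: hphiR.
  have P1 : forall x, lam * Rdu S Rs lam (fun=> 1) x =
      1 - \sum_(b : {i : 'I_M & 'I_(kappa i)}) ell Rs phi lam (tagged b) x.
    move=> x; rewrite /Rdu mulr_sumr big_split_ord /=.
    have hc : forall i : 'I_K,
        lam * Rs (rshift M i) lam (fun y => 1 * \1_(S (rshift M i)) y) x =
        \1_(S (rshift M i)) x.
      move=> i; have [d1 A1] := hcons i.
      have [_ r2] := hres (rshift M i) lam l0.
      have e1 : (fun y => 1 * \1_(S (rshift M i)) y : R) = (\1_(S (rshift M i)) : T -> R).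
        by apply: funext => y; rewrite mul1r.
      rewrite e1.
      have c1 := gen_dom (hgen _) d1.
      have e2 : Rs (rshift M i) lam (fun y => lam * \1_(S (rshift M i)) y + 0) =
          \1_(S (rshift M i)).
        rewrite -[RHS](r2 _ d1) A1; congr Rs; apply: funext => y.
        by rewrite subr0 addr0.
      rewrite (res_lin lam (hgen _) (hres _ _ l0) c1 (Cext0 _)) in e2.
      rewrite (res0 (hgen _) (hres _ _ l0)) in e2.
      by have := congr1 (fun h => h x) e2; rewrite /= addr0.
    have hnc : forall i : 'I_M,
        lam * Rs (lshift K i) lam (fun y => 1 * \1_(S (lshift K i)) y) x =
        \1_(S (lshift K i)) x - \sum_(j < kappa i) ell Rs phi lam j x.
      move=> i.
      have e1 : (fun y => 1 * \1_(S (lshift K i)) y) =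
          (fun y => \sum_(j < kappa i) phi i j y).
        by apply: funext => y; rewrite mul1r hphisum.
      rewrite e1 (res_sum (hgen _) (hres _ _ l0) (hphiC i)) /= mulr_sumr.
      rewrite -hphisum -sumrB; apply: eq_bigr => j _; rewrite /ell; lra.
    rewrite (eq_bigr _ (fun i _ => hnc i)) (eq_bigr _ (fun i _ => hc i)).
    have hs : \sum_(i < M + K) \1_(S i) x = 1 :> R.
      have [i0 Si0] := hcov x.
      rewrite (bigD1 i0) //= big1 ?addr0; first by rewrite indicE mem_set.
      move=> i ni; rewrite indicE memNset // => Six.
      have H : (S i `&` S i0) x := conj Six Si0.
      by rewrite (hdisj _ _ ni) in H.
    rewrite big_split_ord /= in hs.
    rewrite sumrB addrAC hs.
    congr (_ - _).
    exact: (sig_big_dep xpredT (fun _ _ => true) (fun i j => ell Rs phi lam j x)).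
  move=> a.
  have eR : Rdu S Rs lam (fun=> 1) =
      (fun x => lam^-1 * (1 - \sum_(b : {i : 'I_M & 'I_(kappa i)}) ell Rs phi lam (tagged b) x)).
    by apply: funext => x; rewrite -P1 mulrA mulVf ?mul1r // gt_eqF.
  have [is1 is2] := Rint_sum (index_enum {i : 'I_M & 'I_(kappa i)})
     (fun b => ell Rs phi lam (tagged b)) (iell a).
  have i1 : (p a).-integrable setT (EFin \o (fun=> 1 : R)).
    by apply: (bounded_int (c := 1) (hp1 a)) => // x; rewrite normr1.
  pose sm := fun x => \sum_(b : {i : 'I_M & 'I_(kappa i)}) ell Rs phi lam (tagged b) x.
  have iB : (p a).-integrable setT (EFin \o (fun x => 1 - sm x)).
    have -> : EFin \o (fun x => 1 - sm x) = ((EFin \o cst 1%R) \- (EFin \o sm))%E.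
      by apply: funext => x /=; rewrite EFinB.
    exact: integrableB.
  rewrite /vvec eR RintegralZl // RintegralB // Rintegral_cst // mul1r.
  rewrite is2 mulrA mulfV ?gt_eqF // mul1r; congr (_ - _).
  apply: eq_bigr => b _; rewrite E5 //.
have hu : forall lam, 0 < lam -> forall a,
    uvec S Rs phi p (fun=> 1) lam a =
    vvec S Rs p (fun=> 1) lam a + \sum_b Nmat S Rs phi p lam a b * uvec S Rs phi p (fun=> 1) lam b.
  move=> lam l0.
  have [w hw] := existsol (Nmat S Rs phi p lam) (vvec S Rs p (fun=> 1) lam) (hNn lam l0).
  apply: (@xgetPex _ (fun=> 0) [set w : {i : 'I_M & 'I_(kappa i)} -> R | forall a,
     w a = vvec S Rs p (fun=> 1) lam a + \sum_b Nmat S Rs phi p lam a b * w b]).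
  by exists w.
have hw : forall lam, 0 < lam -> forall a,
    lam * uvec S Rs phi p (fun=> 1) lam a - 1 =
    (fine (p a setT) - 1) + \sum_b Nmat S Rs phi p lam a b *
       (lam * uvec S Rs phi p (fun=> 1) lam b - 1).
  move=> lam l0 a; rewrite hu // mulrDr (proj2 (key lam l0)) mulr_sumr.
  under [X in _ = _ + X]eq_bigr do rewrite mulrBr mulr1.
  rewrite sumrB.
  under [X in _ = _ + (X - _)]eq_bigr do rewrite mulrCA.
  lra.
have hc1 : forall a, fine (p a setT) <= 1.
  move=> a; have := hp1 a; have := measure_ge0 (p a) setT.
  case: (p a setT) => //= r; rewrite !lee_fin //.
split.
  move=> lam l0 a.
  have hN0 := proj1 (key lam l0).
  have d0 := nonpos (fun b => lam * uvec S Rs phi p (fun=> 1) lam b - 1) (hNn lam l0) hN0.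
  have := hw lam l0 a.
  have hs : \sum_b Nmat S Rs phi p lam a b * (lam * uvec S Rs phi p (fun=> 1) lam b - 1) <= 0.
    apply: sumr_le0 => b _; apply: mulr_ge0_le0 => //; apply: d0 => a'.
    rewrite hw //; have := hc1 a'; lra.
  lra.
move=> hp lam l0 a.
have h := kernel0 (fun b => lam * uvec S Rs phi p (fun=> 1) lam b - 1) (hNn lam l0).
have : lam * uvec S Rs phi p (fun=> 1) lam a - 1 = 0.
  apply: h => b; rewrite hw // hp /= subrr add0r //.
lra.
Qed.
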